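(* Let $\mathcal{P}=\{1,\dots,M\}$, $i\in\mathcal{P}$, $i'\notin\mathcal{P}$, $\mathcal{P}^R=\mathcal{P}\cup\{i'\}$, and $D\subseteq\mathcal{P}$ nonempty. For each $j\in\mathcal{P}^R$ let $g_j\colon 2^{\mathcal{P}^R}\to\mathbb{R}_{\ge0}$ be monotone, supermodular and replication-invariant ($g_j(T\cup\{i,i'\})=g_j(T\cup\{i\})=g_j(T\cup\{i'\})$ for all $T\subseteq\mathcal{P}^R$), with $g_{i'}=g_i$ and $\sum_{j\in D}g_j(\mathcal{P})>0$. Define $w(S)=\sum_{j\in D}g_j(S)+\sum_{j\in S}(g_j(S)-g_j(\{j\}))$ for $S\subseteq\mathcal{P}^R$, $a_j=g_j(\mathcal{P})-g_j(\{j\})$ for $j\in\mathcal{P}$, and $A=\sum_{j\in\mathcal{P}}a_j$; assume $A>0$. Let $\phi(i)$ be the normalized Shapley value of $i$ for $w$ restricted to $2^{\mathcal{P}}$ and $\phi^R(i)$ that for $w$ on $2^{\mathcal{P}^R}$. Then $$\phi^R(i)\le\frac{\phi(i)A+a_i}{2(A+a_i)},$$ i.e. $t^R=2(\phi^R(i)(A+a_i)-a_i)\le t=\phi(i)A-a_i$.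
   Context: Normalized Shapley values: $\phi(i)=\frac{1}{w(\mathcal{P})}\sum_{S\subseteq\mathcal{P}\setminus\{i\}}\frac{|S|!(M-|S|-1)!}{M!}\big(w(S\cup\{i\})-w(S)\big)$ and $\phi^R(i)=\frac{1}{w(\mathcal{P}^R)}\sum_{S\subseteq\mathcal{P}^R\setminus\{i\}}\frac{|S|!(M-|S|)!}{(M+1)!}\big(w(S\cup\{i\})-w(S)\big)$. Setting: each party $j$ has validation data $V_j$, $g_j(S)$ is the performance on $V_j$ of the model trained on the relevant training data of parties in $S$, $D$ indexes the distinct validation tasks (the replica's task equals $i$'s, so $D$ is unchanged), $a_j$ is party $j$'s gain, party $j$ receives payout $A\phi(j)$ and pays $a_j$. *)

(* Defs.v *)
(* Parties of P^R are encoded as option 'I_M: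
   Some j (j : 'I_M) is party j of P = {1..M}, None is the replica i'. *)
From HB Require Import structures.
From mathcomp Require Import all_boot all_order all_algebra.
Set Implicit Arguments. Unset Strict Implicit. Unset Printing Implicit Defensive.
Import Order.TTheory GRing.Theory Num.Theory.
Local Open Scope ring_scope.

Definition partiesP (M : nat) : {set option 'I_M} := [set Some j | j : 'I_M].

Definition nshapley (R : realFieldType) (T : finType) (n : nat) (N : {set T})
  (w : {set T} -> R) (i : T) : R :=
  (w N)^-1 * \sum_(S in powerset (N :\ i))
      ((#|S|`! * (n - #|S| - 1)`!)%:R / (n`!)%:R) * (w (i |: S) - w S).

Definition wgame (R : realFieldType) (M : nat) (g : option 'I_M -> {set option 'I_M} -> R)
  (D : {set 'I_M}) (S : {set option 'I_M}) : R :=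
  \sum_(j in D) g (Some j) S + \sum_(j in S) (g j S - g j [set j]).

Definition gain (R : realFieldType) (M : nat) (g : option 'I_M -> {set option 'I_M} -> R)
  (j : 'I_M) : R :=
  g (Some j) (partiesP M) - g (Some j) [set Some j].

(* Main.v *)
Require Import Defs.
From HB Require Import structures.
From mathcomp Require Import all_boot all_order all_algebra.
From mathcomp Require Import zify ring lra.
Import Order.TTheory GRing.Theory Num.Theory.
Local Open Scope ring_scope.
Set Implicit Arguments. Unset Strict Implicit.

Section Gen.
Variable R : realFieldType.

Definition cw (n s : nat) : R := ((s`! * (n - s - 1)`!)%:R / (n`!)%:R).

Lemma cw_ge0 n s : 0 <= cw n s.
Proof. by rewrite /cw divr_ge0 // ler0n. Qed.

Lemma wid s k : cw (s+k).+2 s + cw (s+k).+2 s.+1 = cw (s+k).+1 s.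
Proof.
rewrite /cw.
have -> : ((s + k).+2 - s - 1 = k.+1)%N by lia.
have -> : ((s + k).+2 - s.+1 - 1 = k)%N by lia.
rewrite !factS !natrM.
have h1 : (s`!)%:R != 0 :> R by rewrite pnatr_eq0 -lt0n fact_gt0.
have h2 : (k`!)%:R != 0 :> R by rewrite pnatr_eq0 -lt0n fact_gt0.
have h3 : ((s+k)`!)%:R != 0 :> R by rewrite pnatr_eq0 -lt0n fact_gt0.
have h4 : (s+k).+2%:R != 0 :> R by rewrite pnatr_eq0.
have h5 : (s+k).+1%:R != 0 :> R by rewrite pnatr_eq0.
rewrite -!natr1 !natrD.
rewrite -!natr1 !natrD in h4 h5.
by field; rewrite ?h3 ?h4 ?h5.
Qed.

Lemma wid' M s : (s < M)%N -> cw M.+1 s + cw M.+1 s.+1 = cw M s.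
Proof.
move=> sM; have [k ->] : exists k, M = (s + k).+1 by exists (M - s.+1)%N; lia.
exact: wid.
Qed.

Lemma split_pow (T : finType) (a : T) (B : {set T}) (F : {set T} -> R) :
  a \notin B -> \sum_(S in powerset (a |: B)) F S
    = \sum_(S in powerset B) (F S + F (a |: S)).
Proof.
move=> aB.
rewrite (bigID (fun S : {set T} => a \in S)) /= addrC big_split /=.
congr (_ + _).
- apply: eq_bigl => S; rewrite !inE; apply/idP/idP.
  + move=> /andP[sS aS]; apply/subsetP=> x xS.
    move/subsetP: sS => /(_ x xS); rewrite !inE; case: eqP => [ex|//] _.
    by subst x; rewrite xS in aS.
  + move=> sB; rewrite (subset_trans sB (subsetUr _ _)) /=.
    by apply/negP => aS; rewrite (subsetP sB _ aS) in aB.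
- have inj : {in powerset B &, injective (fun S => a |: S)}.
    move=> S1 S2; rewrite !inE => s1 s2 e.
    have n1 : a \notin S1 by apply/negP => h; rewrite (subsetP s1 _ h) in aB.
    have n2 : a \notin S2 by apply/negP => h; rewrite (subsetP s2 _ h) in aB.
    by rewrite -(setU1K n1) -(setU1K n2) e.
  rewrite -(big_imset F inj); apply: eq_bigl => S.
  apply/andP/imsetP.
  + move=> [sS aS]; rewrite inE in sS; exists (S :\ a); last by rewrite setD1K.
    rewrite inE; apply/subsetP => x; rewrite !inE => /andP[xa xS].
    by move/subsetP: sS => /(_ x xS); rewrite !inE (negbTE xa).
  + move=> [S' sS' ->]; rewrite inE setU11; split => //.
    by rewrite setUS // -powersetE.
Qed.

Lemma split_w (T : finType) (a : T) (B : {set T}) (F : {set T} -> R) n :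
  a \notin B -> (#|B| < n)%N ->
  (forall S : {set T}, S \subset B -> F (a |: S) = F S) ->
  \sum_(S in powerset (a |: B)) cw n.+1 #|S| * F S
    = \sum_(S in powerset B) cw n #|S| * F S.
Proof.
move=> aB Bn hF; rewrite split_pow //; apply: eq_bigr => S; rewrite inE => sB.
have aS : a \notin S by apply/negP => h; rewrite (subsetP sB _ h) in aB.
rewrite hF // cardsU1 aS add1n -mulrDl wid' //.
exact: leq_ltn_trans (subset_leq_card sB) Bn.
Qed.

Lemma cw_sum (T : finType) n : forall B : {set T}, #|B| = n ->
  \sum_(S in powerset B) cw n.+1 #|S| = 1.
Proof.
elim: n => [|n IH] B cB.
  by rewrite (cards0_eq cB) powerset0 big_set1 cards0 /cw /= divr1.
have [a aB] : exists a, a \in B.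
  by apply/set0Pn; rewrite -card_gt0 cB.
have nB : a \notin B :\ a by rewrite !inE eqxx.
have cB' : #|B :\ a| = n by move: cB; rewrite (cardsD1 a B) aB add1n => -[].
rewrite -(setD1K aB).
have := @split_w _ _ _ (fun _ => 1) _ nB; rewrite cB' => /(_ n.+1 (ltnSn _) (fun _ _ => erefl)).
under eq_bigr do rewrite mulr1; move=> ->.
under eq_bigr do rewrite mulr1; exact: IH.
Qed.
End Gen.
Lemma final_ineq (R : realFieldType) (x G A a : R) : 0 < G -> 0 < A -> 0 <= a -> a <= A -> 0 <= x -> x <= a ->
 (G + A + a)^-1 * x <= ((G + A)^-1 * x * A + a) / (2 * (A + a)).
Proof.
move=> hG hA ha haA hx hxa.
rewrite -subr_ge0.
have h1 : G + A != 0 by rewrite gt_eqF // ; lra.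
have h2 : G + A + a != 0 by rewrite gt_eqF // ; lra.
have h3 : A + a != 0 by rewrite gt_eqF // ; lra.
have h4 : 2 != 0 :> R by rewrite pnatr_eq0.
have -> : ((G + A)^-1 * x * A + a) / (2 * (A + a)) - (G + A + a)^-1 * x =
  ((a-x)*(G+A)*(G+A+a) + x*(G+A-A)*(G+A-a)) / (2*(A+a)*(G+A)*(G+A+a)).
  field; rewrite ?h1 ?h2 ?h3 ?h4 //=.
apply: divr_ge0.
  by apply: addr_ge0; repeat apply: mulr_ge0; lra.
by repeat apply: mulr_ge0; lra.
Qed.

Unset Implicit Arguments.

Theorem theorem2 (R : realFieldType) (M : nat) (i : 'I_M) (D : {set 'I_M})
  (g : option 'I_M -> {set option 'I_M} -> R)
  (hD : D != set0)
  (hnn : forall j S, 0 <= g j S)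
  (hmono : forall j (S T : {set option 'I_M}), S \subset T -> g j S <= g j T)
  (hsuper : forall j (S T : {set option 'I_M}), g j S + g j T <= g j (S :|: T) + g j (S :&: T))
  (hrep1 : forall j (T : {set option 'I_M}), g j (T :|: [set Some i; None]) = g j (T :|: [set Some i]))
  (hrep2 : forall j (T : {set option 'I_M}), g j (T :|: [set Some i]) = g j (T :|: [set None]))
  (hcopy : g None = g (Some i))
  (hDpos : 0 < \sum_(j in D) g (Some j) (partiesP M))
  (hA : 0 < \sum_(j < M) gain g j) :
  let A := \sum_(j < M) gain g j in
  let w := wgame g D in
  let phi := nshapley M (partiesP M) w (Some i) in
  let phiR := nshapley M.+1 [set: option 'I_M] w (Some i) in
  phiR <= (phi * A + gain g i) / (2 * (A + gain g i)).
Proof.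
cbv zeta.
set A := \sum_(j < M) gain g j.
set w := wgame g D.
set phi := nshapley M (partiesP M) w (Some i).
set phiR := nshapley M.+1 [set: option 'I_M] w (Some i).
have inP : forall j : 'I_M, Some j \in partiesP M by move=> j; apply: imset_f.
have NoneP : None \notin partiesP M by apply/imsetP => -[x _].
have indep : forall j S, g j S = g j (S :\: [set Some i; None]).
  move=> j S; set T0 := S :\: [set Some i; None].
  have le1 : g j (T0 :|: [set Some i]) <= g j T0.
    have := hsuper j (T0 :|: [set Some i]) (T0 :|: [set None]).
    have -> : (T0 :|: [set Some i]) :|: (T0 :|: [set None]) = T0 :|: [set Some i; None].
      by apply/setP => x; rewrite !inE; case: (x == Some i); case: (x == None); case: (x \in S).
    have -> : (T0 :|: [set Some i]) :&: (T0 :|: [set None]) = T0.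
      apply/setP => x; rewrite !inE; case: x => [j'|] //=.
      by rewrite (_ : (Some j' == None) = false) //; case: (Some j' == Some i); case: (Some j' \in S).
    by rewrite hrep1 -hrep2; lra.
  apply/eqP; rewrite eq_le; apply/andP; split; last exact/hmono/subsetDl.
  apply: le_trans le1; rewrite -hrep1; apply: hmono.
  by apply/subsetP => x xS; rewrite !inE xS; case: (x == Some i); case: (x == None).
have gU : forall j S, g j (Some i |: S) = g j S.
  move=> j S; rewrite indep [RHS]indep; congr (g j _).
  by apply/setP => x; rewrite !inE; case: (x == Some i).
have gN : forall j S, g j (None |: S) = g j S.
  move=> j S; rewrite indep [RHS]indep; congr (g j _).
  by apply/setP => x; rewrite !inE; case: (x == None); rewrite ?orbT.
have g1 : forall j, g j [set Some i] = g j [set None].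
  move=> j; rewrite indep [RHS]indep; congr (g j _).
  by apply/setP => x; rewrite !inE; case: (x == Some i); case: (x == None).
have gT : forall j, g j setT = g j (partiesP M).
  move=> j; rewrite indep [RHS]indep; congr (g j _).
  by apply/setP => -[j'|]; rewrite !inE ?inP ?eqxx ?orbT.
pose F := fun S : {set option 'I_M} => w (Some i |: S) - w S.
have marg : forall S : {set option 'I_M}, Some i \notin S -> F S = g (Some i) S - g (Some i) [set Some i].
  move=> S hS; rewrite /F /w /wgame big_setU1 //=.
  have e1 : \sum_(j in D) g (Some j) (Some i |: S) = \sum_(j in D) g (Some j) S.
    by apply: eq_bigr => j _; rewrite gU.
  have e2 : \sum_(j in S) (g j (Some i |: S) - g j [set j]) = \sum_(j in S) (g j S - g j [set j]).
    by apply: eq_bigr => j _; rewrite gU.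
  rewrite e1 e2 gU; ring.
pose P' := partiesP M :\ Some i.
have iP' : Some i \notin P' by rewrite !inE eqxx.
have NP' : None \notin P' by rewrite !inE negb_and NoneP orbT.
have eqX : [set: option 'I_M] :\ Some i = None |: P'.
  by apply/setP => -[j|]; rewrite !inE ?inP ?eqxx ?andbT.
have M0 : (0 < M)%N by apply: leq_ltn_trans (leq0n i) (ltn_ord i).
have cardP : #|partiesP M| = M.
  by rewrite card_imset ?card_ord //; move=> x y [].
have cardP' : #|P'| = M.-1.
  have h := cardsD1 (Some i) (partiesP M); rewrite inP add1n cardP -/P' in h; by rewrite [in RHS]h.
have P'M : (#|P'| < M)%N by rewrite cardP' prednK.
pose x := \sum_(S in powerset P') cw R M #|S| * F S.
have ePhi : phi = (w (partiesP M))^-1 * x by [].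
have ePhiR : phiR = (w setT)^-1 * x.
  rewrite /phiR /nshapley eqX /x -(@split_w _ _ None P' F M NP' P'M) //.
  move=> S sS.
  have hS : Some i \notin S by apply/negP => h; rewrite (subsetP sS _ h) in iP'.
  rewrite !marg ?gN // !inE negb_or hS andbT.
  by apply/eqP => -[].
have Fb : forall S : {set option 'I_M}, S \subset P' -> 0 <= F S <= gain g i.
  move=> S sS.
  have hS : Some i \notin S by apply/negP => h; rewrite (subsetP sS _ h) in iP'.
  rewrite marg // /gain.
  have e : g (Some i) [set Some i] = g (Some i) set0.
    rewrite indep [RHS]indep; congr (g _ _).
    by apply/setP => y; rewrite !inE; case: (y == Some i); case: (y == None).
  rewrite e subr_ge0 hmono ?sub0set //= lerD2r hmono //.
  exact: subset_trans sS (subD1set _ _).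
have x0 : 0 <= x.
  apply: sumr_ge0 => S; rewrite inE => sS; apply: mulr_ge0; first exact: cw_ge0.
  by case/andP: (Fb S sS).
have xa : x <= gain g i.
  have : \sum_(S in powerset P') cw R M #|S| = 1.
    by have := @cw_sum R _ M.-1 P' cardP'; rewrite prednK.
  move=> hs; rewrite -[gain g i]mul1r -hs mulr_suml.
  apply: ler_sum => S; rewrite inE => sS; apply: ler_wpM2l; first exact: cw_ge0.
  by case/andP: (Fb S sS).
have gain0 : forall j, 0 <= gain g j.
  by move=> j; rewrite /gain subr_ge0 hmono // sub1set inP.
have aA : gain g i <= A.
  by rewrite /A (bigD1 i) //= lerDl sumr_ge0.
have sumP : forall (h : option 'I_M -> R),
    \sum_(j in partiesP M) h j = \sum_(j < M) h (Some j).
  move=> h; rewrite /partiesP big_imset /=; last by move=> y z _ _ [].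
  by apply: eq_bigl.
have eW : w (partiesP M) = \sum_(j in D) g (Some j) (partiesP M) + A.
  by rewrite /w /wgame sumP.
have eWR : w setT = \sum_(j in D) g (Some j) (partiesP M) + A + gain g i.
  rewrite /w /wgame.
  have -> : [set: option 'I_M] = None |: partiesP M.
    by apply/setP => -[j|]; rewrite !inE ?inP ?eqxx ?orbT.
  rewrite big_setU1 //= sumP -/A.
  have -> : \sum_(j in D) g (Some j) (None |: partiesP M) = \sum_(j in D) g (Some j) (partiesP M).
    by apply: eq_bigr => j _; rewrite gN.
  have -> : \sum_(j < M) (g (Some j) (None |: partiesP M) - g (Some j) [set Some j]) = A.
    by apply: eq_bigr => j _; rewrite gN.
  rewrite gN hcopy -g1 /gain; ring.
rewrite ePhiR ePhi eWR eW.
exact: final_ineq.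
Qed.
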